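(* Consider $\mathrm{DSS}(n,k,d,1,\alpha,\alpha',\beta,M)$ operating at the MBR point, i.e. $\alpha=(d+1)\beta$ and $M=\sum_{i=0}^{k-1}(d+1-i)\beta$, and suppose that under every sequence of failures/repairs (each repair using $\beta$ packets from each of $d$ surviving complete nodes and from the single repairing node) every $k$ complete nodes can reconstruct the file. Then $\alpha'\ge k\beta$.
   Context: $\mathrm{DSS}(n,k,d,h,\alpha,\alpha',\beta,M)$: a file of $M$ packets is stored on $n$ complete storage nodes of capacity $\alpha$ each so that any $k$ of them reconstruct the file; in addition there are $h$ repairing storage nodes of capacity $\alpha'<\alpha$, which never fail and are never contacted by data collectors. When a complete node fails, a new node is created from $\beta$ packets received from each of $d$ surviving complete nodes and from each of the $h$ repairing nodes; repair is functional. Quantities $\alpha,\alpha',\beta$ are nonnegative integers. *)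

(* Defs.v *)
From mathcomp Require Import all_boot.
Set Implicit Arguments. Unset Strict Implicit. Unset Printing Implicit Defensive.

(* Model of DSS(n,k,d,h=1,alpha,alpha',beta,M) with functional repair.
   Packets are symbols of a finite alphabet A.
   A state assigns to each complete node i a content function F -> alpha.-tuple A
   (what node i stores, as a function of the file). The single repairing node
   stores r x : alpha'.-tuple A and never changes. *)

Definition file (A : finType) (M : nat) := (M.-tuple A)%type.

Definition state (A : finType) (n M alpha : nat) :=
  'I_n -> M.-tuple A -> alpha.-tuple A.

(* A failure/repair event: the failed complete node and the set of d helpers. *)
Definition event (n : nat) := ('I_n * {set 'I_n})%type.

Definition valid_event (n d : nat) (e : event n) : bool :=
  (e.1 \notin e.2) && (#|e.2| == d).

(* Operations used for one repair: each helper j sends enc j (its content)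
   (beta packets), the repairing node sends renc (its content) (beta packets),
   and the new node stores dec (messages from complete nodes; None for
   non-helpers) (message of the repairing node). *)
Record repair_op (A : finType) (n alpha alpha' beta : nat) := RepairOp {
  enc  : 'I_n -> alpha.-tuple A -> beta.-tuple A;
  renc : alpha'.-tuple A -> beta.-tuple A;
  dec  : ('I_n -> option (beta.-tuple A)) -> beta.-tuple A -> alpha.-tuple A
}.

Definition repair_step (A : finType) (n M alpha alpha' beta : nat)
  (r : M.-tuple A -> alpha'.-tuple A) (s : state A n M alpha)
  (e : event n) (op : repair_op A n alpha alpha' beta) : state A n M alpha :=
  fun i x =>
    if i == e.1 then
      dec op (fun j => if j \in e.2 then Some (enc op j (s j x)) else None)
             (renc op (r x))
    else s i x.

(* A (history-dependent) repair strategy: given the history of events,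
   most recent first (including the current event), the repair operation. *)
Definition strategy (A : finType) (n alpha alpha' beta : nat) :=
  seq (event n) -> repair_op A n alpha alpha' beta.

Fixpoint run (A : finType) (n M alpha alpha' beta : nat)
  (s0 : state A n M alpha) (r : M.-tuple A -> alpha'.-tuple A)
  (sigma : strategy A n alpha alpha' beta) (h : seq (event n))
  : state A n M alpha :=
  match h with
  | [::] => s0
  | e :: h' => repair_step r (run s0 r sigma h') e (sigma (e :: h'))
  end.

Definition reconstructible (A : finType) (n M alpha k : nat)
  (s : state A n M alpha) : Prop :=
  forall K : {set 'I_n}, #|K| = k ->
  forall x y : M.-tuple A, (forall i, i \in K -> s i x = s i y) -> x = y.

(* Main.v *)
Require Import Defs.
From mathcomp Require Import all_boot zify.
From Stdlib Require Import FunctionalExtensionality.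

Lemma card_lt N m (hm : m <= N) : #|[set j : 'I_N | j < m]| = m.
Proof.
have -> : [set j : 'I_N | j < m] = widen_ord hm @: [set: 'I_m].
  apply/setP => j; rewrite inE; apply/idP/imsetP.
    by move=> hj; exists (Ordinal hj); rewrite ?inE //; apply: val_inj.
  by case=> i _ ->; rewrite /= ltn_ord.
by rewrite card_imset ?cardsT ?card_ord //; by move=> a b /(congr1 val) /= /val_inj.
Qed.

Section Proof.
Variables (A : finType) (n' M alpha alpha' beta k d : nat).
Hypotheses (hdn : d <= n') (hkd : k <= d).
Variables (s0 : state A n'.+1 M alpha) (r : M.-tuple A -> alpha'.-tuple A)
  (sigma : strategy A n'.+1 alpha alpha' beta).

Definition node (i : nat) : 'I_n'.+1 := inord i.
Definition helpers (i : nat) : {set 'I_n'.+1} :=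
  [set j : 'I_n'.+1 | j <= d] :\ node i.
Definition ev (i : nat) : event n'.+1 := (node i, helpers i).
Fixpoint hist (m : nat) : seq (event n'.+1) :=
  match m with 0 => [::] | m.+1 => ev m :: hist m end.
Definition st m := run s0 r sigma (hist m).
Definition op m := sigma (hist m.+1).

Lemma node_inj i j : i <= d -> j <= d -> (node i == node j) = (i == j).
Proof.
move=> hi hj; rewrite /node -val_eqE /= !inordK //; lia.
Qed.

Lemma claim x y : r x = r y ->
  (forall i j, i < k -> i < j <= d ->
     enc (op i) (node j) (st i (node j) x) = enc (op i) (node j) (st i (node j) y)) ->
  forall m, m <= k -> forall l, l < m -> st m (node l) x = st m (node l) y.
Proof.
move=> hr hyp; elim=> [//|m IH] hm l hl.
rewrite /st /= /repair_step /= -/(st m) -/(op m).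
have hl' : l <= d by lia.
have hm' : m <= d by lia.
rewrite node_inj //.
have [E|hne] := eqVneq l m; last by apply: IH; lia.
subst l.
rewrite hr; congr (dec _ _ _).
apply: functional_extensionality => j.
case: ifP => // hj; congr Some.
move: hj; rewrite !inE => /andP [hjm hjd].
rewrite -(inord_val j) -/(node j).
have [hlt | hge] := ltnP j m.
  by rewrite IH //; lia.
apply: hyp; first lia.
rewrite hjd andbT ltn_neqAle hge andbT.
apply/negP => /eqP E; move: hjm; rewrite -(inord_val j) -/(node j) E.
by rewrite node_inj ?eqxx //; lia.
Qed.

Lemma hist_valid m : m <= k -> all (valid_event d) (hist m).
Proof.
elim: m => [//|m IH] hm /=; rewrite IH ?andbT; last lia.
rewrite /valid_event /= /helpers !inE eqxx /=.
have hmd : node m \in [set j : 'I_n'.+1 | j <= d].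
  by rewrite inE /node inordK; lia.
apply/eqP; apply/eqP; rewrite -(eqn_add2l 1).
rewrite -[X in X + _ == _]/(nat_of_bool true) -hmd -cardsD1.
have -> : [set j : 'I_n'.+1 | j <= d] = [set j : 'I_n'.+1 | j < d.+1].
  by apply/setP => j; rewrite !inE.
by rewrite card_lt // add1n.
Qed.

Definition idx := {i : 'I_k & 'I_(d - i)}.
Definition pnode (p : idx) : 'I_n'.+1 := node (nat_of_ord (tag p) + 1 + nat_of_ord (tagged p)).
Definition g (x : M.-tuple A) : {ffun idx -> beta.-tuple A} :=
  [ffun p : idx => enc (op (tag p)) (pnode p) (st (tag p) (pnode p) x)].

Lemma count_ineq : reconstructible k (st k) ->
  #|A| ^ M <= #|A| ^ alpha' * (#|A| ^ beta) ^ (\sum_(i < k) (d - i)).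
Proof.
move=> hrec.
have inj : injective (fun x => (r x, g x)).
  move=> x y [hr hg].
  apply: (hrec [set j : 'I_n'.+1 | j < k]); first by rewrite card_lt //; lia.
  move=> i; rewrite inE => hi.
  rewrite -(inord_val i) -/(node i); apply: (claim x y hr _ k (leqnn k) _ hi).
  move=> i0 j hi0 /andP [hij hjd].
  have hlt : j - i0 - 1 < d - (Ordinal hi0) by rewrite /=; lia.
  have := congr1 (fun f : {ffun idx -> beta.-tuple A} => f (Tagged (fun i : 'I_k => 'I_(d - i)) (Ordinal hlt))) hg.
  rewrite /= !ffunE /pnode /=.
  by rewrite (_ : i0 + 1 + (j - i0 - 1) = j) //; lia.
have := leq_card _ inj.
rewrite card_prod !card_tuple card_ffun card_tuple card_tagged.
rewrite sumnE big_map big_enum /=.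
by under eq_bigr do rewrite card_ord.
Qed.

End Proof.

Theorem lemma3 (A : finType) (n k d alpha alpha' beta M : nat) :
  1 < #|A| ->
  k <= d -> d < n ->
  alpha = (d + 1) * beta ->
  M = \sum_(i < k) (d + 1 - i) * beta ->
  forall (s0 : state A n M alpha) (r : M.-tuple A -> alpha'.-tuple A)
         (sigma : strategy A n alpha alpha' beta),
  (forall h : seq (event n), all (valid_event d) h ->
     reconstructible k (run s0 r sigma h)) ->
  k * beta <= alpha'.
Proof.
case: n => [|n'] hA hkd hdn ha hM s0 r sigma H; first by [].
have hdn' : d <= n' by [].
have := @count_ineq A n' M alpha alpha' beta k d hdn' hkd s0 r sigma (H _ (@hist_valid n' k d hdn' hkd k (leqnn k))).
rewrite -expnM -expnD leq_exp2l // => hle.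
have hsum : M = (\sum_(i < k) (d - i)) * beta + k * beta.
  rewrite hM big_distrl /=.
  have -> : k * beta = \sum_(i < k) beta by rewrite sum_nat_const card_ord.
  rewrite -big_split /=; apply: eq_bigr => i _.
  have := ltn_ord i; lia.
move: hle; rewrite hsum; lia.
Qed.
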